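(* Let $p_1,\dots,p_r$ be pairwise distinct prime numbers, $\alpha_1,\dots,\alpha_r$ positive integers, and $k_i=p_i^{\alpha_i}$. Then the ring $A=\mathbb{Z}_{k_1}\times\mathbb{Z}_{k_2}\times\cdots\times\mathbb{Z}_{k_r}$ (direct product with componentwise operations) is a BL-ring.
   Context: For a commutative unitary ring $R$, its ideals $Id(R)$ form a residuated lattice $(Id(R),\cap,+,\otimes,\rightarrow,\{0\},R)$, ordered by inclusion, where $I+J$ is the ideal sum, $I\otimes J$ the ideal product, and $I\rightarrow J=(J:I)=\{x\in R: xI\subseteq J\}$. A BL-algebra is a residuated lattice satisfying prelinearity $(x\rightarrow y)\vee(y\rightarrow x)=1$ and divisibility $x\odot(x\rightarrow y)=x\wedge y$. A BL-ring is a commutative unitary ring whose lattice of ideals, with this structure, is a BL-algebra. *)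

(* Defs.v *)
From HB Require Import structures.
From mathcomp Require Import all_boot all_order all_algebra.
Set Implicit Arguments. Unset Strict Implicit. Unset Printing Implicit Defensive.
Import GRing.Theory.
Local Open Scope ring_scope.

Section DProd.
Variables (I : finType) (R : I -> comPzRingType).

Definition dprod_ring := {dffun forall i, R i}.

HB.instance Definition _ := Choice.on dprod_ring.

Definition dp_zero : dprod_ring := [ffun i => 0].
Definition dp_opp (x : dprod_ring) : dprod_ring := [ffun i => - x i].
Definition dp_add (x y : dprod_ring) : dprod_ring := [ffun i => x i + y i].
Definition dp_one : dprod_ring := [ffun i => 1].
Definition dp_mul (x y : dprod_ring) : dprod_ring := [ffun i => x i * y i].

Lemma dp_addA : associative dp_add.
Proof. by move=> x y z; apply/ffunP => i; rewrite !ffunE addrA. Qed.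
Lemma dp_addC : commutative dp_add.
Proof. by move=> x y; apply/ffunP => i; rewrite !ffunE addrC. Qed.
Lemma dp_add0 : left_id dp_zero dp_add.
Proof. by move=> x; apply/ffunP => i; rewrite !ffunE add0r. Qed.
Lemma dp_addN : left_inverse dp_zero dp_opp dp_add.
Proof. by move=> x; apply/ffunP => i; rewrite !ffunE addNr. Qed.

HB.instance Definition _ :=
  GRing.isZmodule.Build dprod_ring dp_addA dp_addC dp_add0 dp_addN.

Lemma dp_mulA : associative dp_mul.
Proof. by move=> x y z; apply/ffunP => i; rewrite !ffunE mulrA. Qed.
Lemma dp_mulC : commutative dp_mul.
Proof. by move=> x y; apply/ffunP => i; rewrite !ffunE mulrC. Qed.
Lemma dp_mul1 : left_id dp_one dp_mul.
Proof. by move=> x; apply/ffunP => i; rewrite !ffunE mul1r. Qed.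
Lemma dp_mulDl : left_distributive dp_mul (@GRing.add dprod_ring).
Proof. by move=> x y z; apply/ffunP => i; rewrite !ffunE mulrDl. Qed.

HB.instance Definition _ :=
  GRing.Zmodule_isComPzRing.Build dprod_ring dp_mulA dp_mulC dp_mul1 dp_mulDl.

End DProd.

Definition Zprod (r : nat) (k : 'I_r -> nat) : comPzRingType :=
  dprod_ring (fun i : 'I_r => 'Z_(k i)).

Section Ideals.
Variable R : comPzRingType.

Definition is_ideal (I : R -> Prop) : Prop :=
  [/\ I 0, (forall x y, I x -> I y -> I (x + y)) & (forall a x, I x -> I (a * x))].

Definition ideal_top : R -> Prop := fun _ => True.
Definition ideal_bot : R -> Prop := fun x => x = 0.

Definition ideal_meet (I J : R -> Prop) : R -> Prop := fun x => I x /\ J x.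

Definition ideal_sum (I J : R -> Prop) : R -> Prop :=
  fun x => exists a b, [/\ I a, J b & x = a + b].

Definition ideal_prod (I J : R -> Prop) : R -> Prop :=
  fun x => forall K, is_ideal K -> (forall a b, I a -> J b -> K (a * b)) -> K x.

Definition ideal_res (I J : R -> Prop) : R -> Prop :=
  fun x => forall a, I a -> J (x * a).

Definition ideal_eq (I J : R -> Prop) : Prop := forall x, I x <-> J x.

(* BL-ring: the residuated lattice of ideals satisfies prelinearity and
   divisibility. *)
Definition BL_ring : Prop :=
  (forall I J, is_ideal I -> is_ideal J ->
     ideal_eq (ideal_sum (ideal_res I J) (ideal_res J I)) ideal_top) /\
  (forall I J, is_ideal I -> is_ideal J ->
     ideal_eq (ideal_prod I (ideal_res I J)) (ideal_meet I J)).

End Ideals.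

(* Main.v *)
Require Import Defs.
From mathcomp Require Import all_boot all_order all_algebra.
From Stdlib Require Import Classical.
Set Implicit Arguments. Unset Strict Implicit. Unset Printing Implicit Defensive.
Import GRing.Theory.
Local Open Scope ring_scope.

Section P.
Variables (r : nat) (k : 'I_r -> nat).
Local Notation A := (Zprod k).

Lemma mulE (x y : A) j : (x * y) j = x j * y j.
Proof. by rewrite ffunE. Qed.
Lemma addE (x y : A) j : (x + y) j = x j + y j.
Proof. by rewrite ffunE. Qed.
Lemma zeroE j : (0 : A) j = 0.
Proof. by rewrite ffunE. Qed.

Definition sc (i : 'I_r) (c : nat) : A :=
  @finfun _ (fun j => 'Z_(k j)) (fun j => if j == i then c%:R else 0).

Lemma scM i c (x : A) j : (sc i c * x) j = if j == i then c%:R * x j else 0.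
Proof. by rewrite mulE ffunE; case: (j == i); rewrite ?mul0r. Qed.

Lemma sumE (s : seq 'I_r) (F : 'I_r -> A) j : (\sum_(i <- s) F i) j = \sum_(i <- s) F i j.
Proof.
elim: s => [|a s IH]; first by rewrite !big_nil zeroE.
by rewrite !big_cons addE IH.
Qed.

Lemma decomp (K : A -> Prop) (x : A) : is_ideal K ->
  (forall i, K (sc i 1 * x)) -> K x.
Proof.
case=> K0 KD KM H.
have -> : x = \sum_(i < r) sc i 1 * x.
  apply/ffunP => j; rewrite sumE (bigD1 j) //= scM eqxx mul1r big1 ?addr0 //.
  by move=> i /negbTE ne; rewrite scM eq_sym ne.
by elim/big_ind: _ => // a b; apply: KD.
Qed.

Lemma zcomp (J : A -> Prop) (x z : A) i (c : 'Z_(k i)) : is_ideal J -> J x ->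
  (forall j, j != i -> z j = 0) -> z i = c * x i -> J z.
Proof.
case=> J0 JD JM Jx Hz Hi.
have -> : z = sc i (val c) * x; last exact: JM.
apply/ffunP => j; rewrite scM; case: (eqVneq j i) => [->|ne]; last exact: Hz.
by rewrite Hi natr_Zp.
Qed.

Lemma gen (hchain : forall i (x y : 'Z_(k i)), exists c, y = c * x \/ x = c * y)
  (I : A -> Prop) i : is_ideal I ->
  exists g, I g /\ forall w, I w -> exists c : 'Z_(k i), w i = c * g i.
Proof.
move=> HI; have I0 : I 0 by case: HI.
pose S (g : A) := [set c * g i | c : 'Z_(k i)].
suff: forall m g, I g -> (#|~: S g| < m)%N -> exists g, I g /\ forall w, I w -> exists c : 'Z_(k i), w i = c * g i.
  by move/(_ _ 0 I0 (ltnSn _)).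
elim=> [|m IH] g Ig Hc //.
have [H|H] := Classical_Prop.classic (forall w, I w -> w i \in S g).
  exists g; split => // w /H /imsetP [c _ ->]; by exists c.
have [w Hw] := Classical_Pred_Type.not_all_ex_not _ _ H.
have [Iw wS] : I w /\ w i \notin S g.
  split; [by apply: Classical_Prop.NNPP => C; apply: Hw | by apply/negP => C; apply: Hw].
have [c [E|E]] := hchain i (g i) (w i).
  by case/negP: wS; rewrite E; apply/imsetP; exists c.
have pr : S g \proper S w.
  apply/properP; split.
    apply/subsetP => z /imsetP [d _ ->]; rewrite E mulrA; apply/imsetP; by exists (d * c).
  exists (w i) => //; apply/imsetP; exists 1 => //; by rewrite mul1r.
apply: (IH w Iw); rewrite -properC in pr.
by apply: leq_trans (proper_card pr) _.
Qed.

Lemma res_ideal (I J : A -> Prop) : is_ideal J -> is_ideal (ideal_res I J).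
Proof.
case=> J0 JD JM; split.
- by move=> a _; rewrite mul0r.
- by move=> x y Hx Hy a Ia; rewrite mulrDl; apply: JD; [apply: Hx|apply: Hy].
- by move=> a x Hx b Ib; rewrite -mulrA; apply: JM; apply: Hx.
Qed.

Lemma sum_ideal (I J : A -> Prop) : is_ideal I -> is_ideal J -> is_ideal (ideal_sum I J).
Proof.
case=> I0 ID IM [J0 JD JM]; split.
- by exists 0, 0; rewrite addr0.
- move=> x y [a [b [Ia Jb ->]]] [a' [b' [Ia' Jb' ->]]].
  exists (a + a'), (b + b'); split; [exact: ID|exact: JD|].
  by rewrite addrACA.
- move=> c x [a [b [Ia Jb ->]]]; exists (c * a), (c * b); split; [exact: IM|exact: JM|].
  by rewrite mulrDr.
Qed.

Lemma meet_ideal (I J : A -> Prop) : is_ideal I -> is_ideal J -> is_ideal (ideal_meet I J).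
Proof.
case=> I0 ID IM [J0 JD JM]; split.
- by split.
- by move=> x y [? ?] [? ?]; split; [exact: ID|exact: JD].
- by move=> a x [? ?]; split; [exact: IM|exact: JM].
Qed.

Lemma res_sc (I J : A -> Prop) i (gI gJ : A) (c : 'Z_(k i)) : is_ideal J -> J gJ ->
  (forall w, I w -> exists d : 'Z_(k i), w i = d * gI i) ->
  gI i = c * gJ i -> ideal_res I J (sc i 1).
Proof.
move=> HJ JgJ HgI E a Ia; have [d Ed] := HgI a Ia.
apply: (zcomp (c := d * c) HJ JgJ).
  by move=> j /negbTE ne; rewrite scM ne.
by rewrite scM eqxx mul1r Ed E mulrA.
Qed.

Lemma BL_of_chain (hchain : forall i (x y : 'Z_(k i)), exists c, y = c * x \/ x = c * y) :
  BL_ring A.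
Proof.
split.
- move=> I J HI HJ x; split => // _.
  apply: decomp; first by apply: sum_ideal; apply: res_ideal.
  move=> i.
  have [gI [IgI HgI]] := gen hchain i HI.
  have [gJ [JgJ HgJ]] := gen hchain i HJ.
  have [c [E|E]] := hchain i (gJ i) (gI i).
  + exists (sc i 1 * x), 0; split; last by rewrite addr0.
    * rewrite mulrC; case: (res_ideal I HJ) => _ _; apply.
      exact: (res_sc HJ JgJ HgI E).
    * by case: (res_ideal J HI).
  + exists 0, (sc i 1 * x); split; last by rewrite add0r.
    * by case: (res_ideal I HJ).
    * rewrite mulrC; case: (res_ideal J HI) => _ _; apply.
      exact: (res_sc HI IgI HgJ E).
- move=> I J HI HJ y; split.
  + move=> Hy; apply: Hy; first exact: meet_ideal.
    move=> a b Ia Hb; split; first by case: HI => _ _ IM; rewrite mulrC; apply: IM.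
    by rewrite mulrC; apply: Hb.
  + case=> Iy Jy K HK Hprod; apply: (decomp HK) => i.
    have [gI [IgI HgI]] := gen hchain i HI.
    have [gJ [JgJ HgJ]] := gen hchain i HJ.
    have [c [E|E]] := hchain i (gI i) (gJ i).
    * have [d Ed] := HgJ y Jy.
      have -> : sc i 1 * y = gI * sc i (val (d * c)).
        rewrite [RHS]mulrC; apply/ffunP => j; rewrite !scM; case: (eqVneq j i) => [->|ne] //.
        by rewrite natr_Zp mul1r Ed E mulrA.
      apply: Hprod => // w Iw; have [e Ee] := HgI w Iw.
      apply: (zcomp (c := e) HJ Jy); first by move=> j /negbTE ne; rewrite scM ne.
      rewrite scM eqxx natr_Zp Ee Ed E.
      by rewrite !mulrA [d * c * e]mulrC !mulrA.
    * rewrite mulrC; apply: Hprod => //.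
      exact: (res_sc HJ JgJ HgI E).
Qed.
End P.
Lemma Zn_gcd (n : nat) (hn : (1 < n)%N) (x : 'Z_n) :
  exists u : nat, (gcdn x n)%:R = u%:R * x :> 'Z_n.
Proof.
have n0 : (n%:R : 'Z_n) = 0 by rewrite -Zp_nat_mod // modnn.
have [x0|xpos] := posnP (val x).
  exists 0%N; rewrite mul0r x0 gcd0n; exact n0.
case: (egcdnP n xpos) => km kn E _.
exists km; rewrite -{2}(natr_Zp x) -natrM E natrD natrM n0 mulr0 add0r.
done.
Qed.

Lemma Zn_chain (n : nat) (hn : (1 < n)%N)
  (hd : forall d1 d2, (d1 %| n)%N -> (d2 %| n)%N -> ((d1 %| d2) || (d2 %| d1))%N)
  (x y : 'Z_n) : exists c : 'Z_n, y = c * x \/ x = c * y.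
Proof.
suff W : forall x y : 'Z_n, (gcdn x n %| gcdn y n)%N -> exists c : 'Z_n, y = c * x.
  case/orP: (hd _ _ (dvdn_gcdr x n) (dvdn_gcdr y n)) => H.
    by have [c Hc] := W _ _ H; exists c; left.
  by have [c Hc] := W _ _ H; exists c; right.
move=> {}x {}y H.
have [u Hu] := Zn_gcd hn x.
have dy : (gcdn x n %| y)%N := dvdn_trans H (dvdn_gcdl _ _).
exists ((y %/ gcdn x n)%:R * u%:R).
by rewrite -mulrA -Hu -natrM divnK // natr_Zp.
Qed.

Local Close Scope ring_scope.

Theorem corollary3p9 (r : nat) (p alpha : 'I_r -> nat) :
  (forall i, prime (p i)) ->
  (forall i j, i != j -> p i != p j) ->
  (forall i, 0 < alpha i) ->
  BL_ring (Zprod (fun i => p i ^ alpha i)).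
Proof.
move=> hp _ ha; apply: BL_of_chain => i x y.
have pp := hp i.
apply: Zn_chain.
  by rewrite -(expn0 (p i)) ltn_exp2l ?prime_gt1 ?ha.
move=> d1 d2 /(dvdn_pfactor _ _ pp) [s _ ->] /(dvdn_pfactor _ _ pp) [t _ ->].
by case: (leqP s t) => st; [rewrite dvdn_exp2l | rewrite orbC dvdn_exp2l // ltnW].
Qed.
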